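(* Let $(a,b,c)\in\mathbb{R}^3\setminus\{(0,0,0)\}$, $A_1=(a,b,c)$ and $A_2=(-ae^{c},-be^{-c},-c)$ (the point on the translation curve through the origin and $A_1$ symmetric to $A_1$ with respect to the origin), and let $0<\alpha<\pi$. A point $P=(x,y,z)\in\mathbf{Sol}\setminus\{A_1,A_2\}$ belongs to the translation-like $\alpha$-isoptic surface of the translation-like segment $\overline{A_1A_2}$ if and only if $$\cos\alpha=\frac{e^{z}(x+ae^{c})(x-a)+e^{-z}(y+be^{-c})(y-b)+4\sinh\frac{z+c}{2}\sinh\frac{z-c}{2}}{\sqrt{e^{z+c}(x-a)^2+e^{-(z+c)}(y-b)^2+4\sinh^2\frac{z-c}{2}}\;\sqrt{e^{z-c}(x+ae^{c})^2+e^{-(z-c)}(y+be^{-c})^2+4\sinh^2\frac{z+c}{2}}}.$$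
   Context: $\mathbf{Sol}$ is $\mathbb{R}^3$ with coordinates $(x,y,z)$, group law $(a,b,c)(x,y,z)=(x+ae^{-z},\,y+be^{z},\,z+c)$, and left-invariant metric $ds^2=e^{2z}dx^2+e^{-2z}dy^2+dz^2$. For $P=(p_1,p_2,p_3)$ let $T_P$ be the isometry $(X,Y,Z)\mapsto(p_1+Xe^{-p_3},\,p_2+Ye^{p_3},\,p_3+Z)$, which maps the origin to $P$. The translation curve starting at the origin with initial unit vector $(u,v,w)$ is $t\mapsto\big(-\tfrac{u}{w}(e^{-wt}-1),\tfrac{v}{w}(e^{wt}-1),wt\big)$ if $w\neq0$ and $t\mapsto(ut,vt,0)$ if $w=0$; every point of $\mathbf{Sol}$ lies on exactly one such curve from the origin (with $t\ge0$). The translation curve from $P$ to $Q$ is the image under $T_P$ of the translation curve from the origin to $T_P^{-1}(Q)$. A translation-like segment $\overline{A_1A_2}$ is the arc of a translation curve between $A_1$ and $A_2$ (only its endpoints matter here). The translation-like $\alpha$-isoptic surface of $\overline{A_1A_2}$ is the set of points $P\notin\{A_1,A_2\}$ such that the angle at $P$, measured with the metric at $P$, between the initial tangent vectors of the translation curves from $P$ to $A_1$ and from $P$ to $A_2$ equals $\alpha$. For $\alpha=\pi/2$ it is called the translation-like Thaloid. *)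

(* Defs.v *)
From Stdlib Require Import Reals.
Open Scope R_scope.

(* Points of Sol = R^3 and tangent vectors, as triples (x, y, z). *)
Definition pt := (R * R * R)%type.

(* Translation curve from the origin with initial unit vector (u,v,w). *)
Definition tcurve (u v w t : R) : pt :=
  if Req_EM_T w 0 then (u * t, v * t, 0)
  else (- (u / w) * (exp (- w * t) - 1), (v / w) * (exp (w * t) - 1), w * t).

Definition T (P Q : pt) : pt :=
  let '(p1, p2, p3) := P in let '(X, Y, Z) := Q in
  (p1 + X * exp (- p3), p2 + Y * exp p3, p3 + Z).

Definition Tinv (P Q : pt) : pt :=
  let '(p1, p2, p3) := P in let '(q1, q2, q3) := Q in
  ((q1 - p1) * exp p3, (q2 - p2) * exp (- p3), q3 - p3).

Definition dT (P V : pt) : pt :=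
  let '(p1, p2, p3) := P in let '(u, v, w) := V in
  (u * exp (- p3), v * exp p3, w).

Definition init_dir_origin (Q d : pt) : Prop :=
  let '(u, v, w) := d in
  u ^ 2 + v ^ 2 + w ^ 2 = 1 /\ exists t, 0 <= t /\ tcurve u v w t = Q.

(* V (tangent vector at P) is the initial tangent vector of the translation
   curve from P to Q, i.e. the image under T_P of the one from the origin
   to T_P^{-1}(Q). *)
Definition init_tangent (P Q V : pt) : Prop :=
  exists d, init_dir_origin (Tinv P Q) d /\ V = dT P d.

Definition gP (P V W : pt) : R :=
  let '(p1, p2, p3) := P in let '(v1, v2, v3) := V in let '(w1, w2, w3) := W in
  exp (2 * p3) * v1 * w1 + exp (- (2 * p3)) * v2 * w2 + v3 * w3.

Definition angleP (P V W : pt) : R :=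
  acos (gP P V W / (sqrt (gP P V V) * sqrt (gP P W W))).

Definition isoptic (alpha : R) (A1 A2 P : pt) : Prop :=
  P <> A1 /\ P <> A2 /\
  exists V1 V2, init_tangent P A1 V1 /\ init_tangent P A2 V2 /\
                angleP P V1 V2 = alpha.

(* Main.v *)
Require Import Defs.
From Stdlib Require Import Reals Lra Psatz.
Open Scope R_scope.

Definition dot (V W : pt) : R :=
  let '(v1, v2, v3) := V in let '(w1, w2, w3) := W in v1*w1 + v2*w2 + v3*w3.
Definition nrm (V : pt) : R := sqrt (dot V V).
Definition scl (k : R) (V : pt) : pt := let '(v1, v2, v3) := V in (k*v1, k*v2, k*v3).
Definition Dv (Q : pt) : pt :=
  let '(q1, q2, q3) := Q in (q1 * exp (q3/2), q2 * exp (-(q3/2)), 2 * sinh (q3/2)).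

Lemma sinh_pos s : 0 < s -> 0 < sinh s.
Proof. intro H. rewrite <- sinh_0. now apply sinh_lt. Qed.
Lemma sinh_neg s : s < 0 -> sinh s < 0.
Proof. intro H. rewrite <- sinh_0. now apply sinh_lt. Qed.
Lemma sinh_nz s : s <> 0 -> sinh s <> 0.
Proof. intro H. destruct (Rtotal_order s 0) as [h|[h|h]].
 - generalize (sinh_neg s h); lra. - lra. - generalize (sinh_pos s h); lra. Qed.

Lemma gP_dT P d e : gP P (dT P d) (dT P e) = dot d e.
Proof.
  destruct P as [[p1 p2] p3]; destruct d as [[u v] w]; destruct e as [[u' v'] w']; simpl.
  replace (2*p3) with (p3+p3) by ring. rewrite !exp_Ropp, !exp_plus.
  assert (exp p3 <> 0) by (apply Rgt_not_eq, exp_pos). field; auto.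
Qed.

Lemma scl_unit d l : dot d d = 1 -> 0 < l -> scl (/ nrm (scl l d)) (scl l d) = d.
Proof.
  destruct d as [[u v] w]; unfold nrm; simpl; intros H Hl.
  replace (l*u*(l*u) + l*v*(l*v) + l*w*(l*w)) with (l*l) by nra.
  rewrite sqrt_square by lra. f_equal; [f_equal|]; field; lra.
Qed.

Lemma Dv_pos Q : Q <> (0,0,0) -> 0 < dot (Dv Q) (Dv Q).
Proof.
  destruct Q as [[q1 q2] q3]; simpl; intro H.
  destruct (Req_dec q3 0) as [->|h].
  - replace (0/2) with 0 by field. rewrite Ropp_0, exp_0, sinh_0.
    assert (q1 <> 0 \/ q2 <> 0) by (destruct (Req_dec q1 0); destruct (Req_dec q2 0); subst; auto).
    destruct H0; nra.
  - assert (sinh (q3/2) <> 0) by (apply sinh_nz; lra).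
    assert (0 <= q1 * exp (q3/2) * (q1 * exp (q3/2))) by nra.
    assert (0 <= q2 * exp (-(q3/2)) * (q2 * exp (-(q3/2)))) by nra.
    nra.
Qed.

Lemma dir_unique Q d : Q <> (0,0,0) -> init_dir_origin Q d ->
  d = scl (/ nrm (Dv Q)) (Dv Q).
Proof.
  destruct d as [[u v] w]; unfold init_dir_origin; intros HQ [Hu [t [Ht Hc]]].
  unfold tcurve in Hc. destruct (Req_EM_T w 0) as [hw|hw].
  - subst w Q. assert (t <> 0) by (intro; subst t; apply HQ; rewrite !Rmult_0_r; reflexivity).
    assert (Hd : Dv (u*t, v*t, 0) = scl t (u, v, 0)).
    { simpl. replace (0/2) with 0 by field. rewrite Ropp_0, exp_0, sinh_0.
      f_equal; [f_equal|]; ring. }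
    rewrite Hd, scl_unit; auto. simpl. lra. lra.
  - subst Q. assert (t <> 0).
    { intro; subst t. apply HQ. rewrite !Rmult_0_r, exp_0. replace (1-1) with 0 by ring. rewrite !Rmult_0_r. reflexivity. }
    set (E := exp (w*t/2)).
    assert (HE : 0 < E) by apply exp_pos.
    assert (E1 : exp (- w * t) = / (E*E)).
    { unfold E. rewrite <- exp_plus, <- exp_Ropp. f_equal. field. }
    assert (E2 : exp (w * t) = E*E).
    { unfold E. rewrite <- exp_plus. f_equal. field. }
    set (l := 2 * sinh (w*t/2) / w).
    assert (Hl : 0 < l).
    { unfold l. destruct (Rtotal_order w 0) as [h|[h|h]].
      - assert (w*t/2 < 0) by nra. generalize (sinh_neg _ H0); intro.
        assert (/w < 0) by (apply Rinv_lt_0_compat; lra). unfold Rdiv; nra.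
      - lra.
      - assert (0 < w*t/2) by nra. generalize (sinh_pos _ H0); intro.
        assert (0 < /w) by (apply Rinv_0_lt_compat; lra). unfold Rdiv; nra. }
    assert (E3 : exp (-(w*t/2)) = / E) by (unfold E; apply exp_Ropp).
    assert (Hd : Dv (- (u / w) * (exp (- w * t) - 1), v / w * (exp (w * t) - 1), w * t)
                 = scl l (u, v, w)).
    { simpl. fold E. rewrite E1, E2, E3. unfold l, sinh. rewrite E3. fold E.
      f_equal; [f_equal|]; field; lra. }
    rewrite Hd, scl_unit; auto. simpl. lra.
Qed.

Lemma pair3 (a b c a' b' c' : R) : a=a' -> b=b' -> c=c' -> (a,b,c)=(a',b',c').
Proof. intros; subst; reflexivity. Qed.

Lemma dir_exists Q : Q <> (0,0,0) -> init_dir_origin Q (scl (/ nrm (Dv Q)) (Dv Q)).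
Proof.
  intro HQ. generalize (Dv_pos Q HQ). unfold nrm.
  destruct Q as [[q1 q2] q3]. simpl. intro Hp.
  set (N := sqrt _). assert (HN : 0 < N) by (apply sqrt_lt_R0; lra).
  assert (HN2 : N * N = (q1 * exp (q3 / 2) * (q1 * exp (q3 / 2)) +
           q2 * exp (- (q3 / 2)) * (q2 * exp (- (q3 / 2))) +
           2 * sinh (q3 / 2) * (2 * sinh (q3 / 2)))) by (apply sqrt_sqrt; lra).
  split.
  { apply (Rmult_eq_reg_l (N*N)); [|nra]. rewrite Rmult_1_r. rewrite HN2 at 2. field. lra. }
  set (E := exp (q3/2)).
  assert (HE : 0 < E) by apply exp_pos.
  assert (E1 : exp (- q3) = / (E*E)).
  { unfold E. rewrite <- exp_plus, <- exp_Ropp. f_equal. field. }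
  assert (E2 : exp q3 = E*E).
  { unfold E. rewrite <- exp_plus. f_equal. field. }
  assert (E3 : exp (-(q3/2)) = / E) by (unfold E; apply exp_Ropp).
  unfold tcurve. destruct (Req_EM_T _ 0) as [hw|hw].
  - assert (q3 = 0).
    { destruct (Req_dec q3 0); auto. exfalso. assert (sinh (q3/2) <> 0) by (apply sinh_nz; lra).
      assert (/N <> 0) by (apply Rinv_neq_0_compat; lra). apply Rmult_integral in hw. lra. }
    subst q3. exists N. split; [lra|].
    assert (HE1 : E = 1) by (unfold E; replace (0/2) with 0 by field; apply exp_0).
    assert (HE2 : exp (- (0/2)) = 1) by (rewrite E3, HE1; field).
    rewrite HE2. rewrite HE1. apply pair3; field; lra.
  - assert (Hq : q3 <> 0).
    { intro; subst q3. apply hw. replace (0/2) with 0 by field. rewrite sinh_0. ring. }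
    assert (Hs : sinh (q3/2) <> 0) by (apply sinh_nz; lra).
    exists (q3 / (/ N * (2 * sinh (q3 / 2)))). split.
    { destruct (Rtotal_order q3 0) as [h|[h|h]].
      - assert (sinh (q3/2) < 0) by (apply sinh_neg; lra).
        assert (/ N * (2 * sinh (q3 / 2)) < 0).
        { assert (0 < /N) by (apply Rinv_0_lt_compat; lra). nra. }
        assert (/ (/ N * (2 * sinh (q3 / 2))) < 0) by (apply Rinv_lt_0_compat; lra).
        unfold Rdiv. nra.
      - lra.
      - assert (0 < sinh (q3/2)) by (apply sinh_pos; lra).
        assert (0 < / N * (2 * sinh (q3 / 2))).
        { assert (0 < /N) by (apply Rinv_0_lt_compat; lra). nra. }
        assert (0 < / (/ N * (2 * sinh (q3 / 2)))) by (apply Rinv_0_lt_compat; lra).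
        unfold Rdiv. nra. }
    replace (- (/ N * (2 * sinh (q3 / 2))) * (q3 / (/ N * (2 * sinh (q3 / 2))))) with (- q3)
      by (field; lra).
    replace (/ N * (2 * sinh (q3 / 2)) * (q3 / (/ N * (2 * sinh (q3 / 2))))) with q3
      by (field; lra).
    assert (E - / E <> 0) by (intro h; apply Hs; unfold sinh; rewrite E3; fold E; rewrite h; field).
    rewrite E1, E2. fold E. rewrite E3. unfold sinh. rewrite E3. fold E.
    assert (E*E - 1 <> 0).
    { replace (E*E-1) with (E*(E - /E)) by (field; lra). apply Rmult_integral_contrapositive; split; lra. }
    apply pair3; field; repeat split; lra.
Qed.

Ltac ex_solve := repeat rewrite <- exp_Ropp; repeat rewrite <- exp_plus; apply f_equal; field.

Lemma idents (a b c x y z : R) :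
  let Q1 := Tinv (x,y,z) (a,b,c) in
  let Q2 := Tinv (x,y,z) (- a * exp c, - b * exp (- c), - c) in
  dot (Dv Q1) (Dv Q2) =
     exp z * (x + a * exp c) * (x - a) + exp (- z) * (y + b * exp (- c)) * (y - b)
        + 4 * sinh ((z + c) / 2) * sinh ((z - c) / 2) /\
  dot (Dv Q1) (Dv Q1) = exp (z + c) * (x - a) ^ 2 + exp (- (z + c)) * (y - b) ^ 2
              + 4 * sinh ((z - c) / 2) ^ 2 /\
  dot (Dv Q2) (Dv Q2) = exp (z - c) * (x + a * exp c) ^ 2 + exp (- (z - c)) * (y + b * exp (- c)) ^ 2
              + 4 * sinh ((z + c) / 2) ^ 2.
Proof.
  simpl. unfold sinh.
  set (E1 := exp (z/2)). set (E2 := exp (c/2)).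
  assert (H1 : 0 < E1) by apply exp_pos. assert (H2 : 0 < E2) by apply exp_pos.
  assert (r1 : exp z = E1*E1) by (unfold E1; ex_solve).
  assert (r2 : exp (-z) = /E1*/E1) by (unfold E1; ex_solve).
  assert (r3 : exp c = E2*E2) by (unfold E2; ex_solve).
  assert (r4 : exp (-c) = /E2*/E2) by (unfold E2; ex_solve).
  assert (r5 : exp ((c-z)/2) = E2 * /E1) by (unfold E1, E2; ex_solve).
  assert (r6 : exp (-((c-z)/2)) = E1 * /E2) by (unfold E1, E2; ex_solve).
  assert (r7 : exp ((-c-z)/2) = /E1 * /E2) by (unfold E1, E2; ex_solve).
  assert (r8 : exp (-((-c-z)/2)) = E1 * E2) by (unfold E1, E2; ex_solve).
  assert (r9 : exp ((z+c)/2) = E1 * E2) by (unfold E1, E2; ex_solve).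
  assert (r10 : exp (-((z+c)/2)) = /E1 * /E2) by (unfold E1, E2; ex_solve).
  assert (r11 : exp ((z-c)/2) = E1 * /E2) by (unfold E1, E2; ex_solve).
  assert (r12 : exp (-((z-c)/2)) = E2 * /E1) by (unfold E1, E2; ex_solve).
  assert (r13 : exp (z+c) = E1*E1*(E2*E2)) by (unfold E1, E2; ex_solve).
  assert (r14 : exp (-(z+c)) = /E1*/E1*(/E2*/E2)) by (unfold E1, E2; ex_solve).
  assert (r15 : exp (z-c) = E1*E1*(/E2*/E2)) by (unfold E1, E2; ex_solve).
  assert (r16 : exp (-(z-c)) = /E1*/E1*(E2*E2)) by (unfold E1, E2; ex_solve).
  rewrite r1, r2, r3, r4, r5, r6, r7, r8, r9, r10, r11, r12, r13, r14, r15, r16.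
  repeat split; field; lra.
Qed.

Lemma unit_of Q : Q <> (0,0,0) -> dot (scl (/ nrm (Dv Q)) (Dv Q)) (scl (/ nrm (Dv Q)) (Dv Q)) = 1.
Proof.
  intro H. generalize (dir_exists Q H). destruct (scl _ _) as [[u v] w].
  simpl. intros [h _]. lra.
Qed.

Lemma angle_units P d1 d2 : dot d1 d1 = 1 -> dot d2 d2 = 1 ->
  angleP P (dT P d1) (dT P d2) = acos (dot d1 d2).
Proof.
  intros h1 h2. unfold angleP. rewrite !gP_dT, h1, h2, sqrt_1. f_equal. field.
Qed.

Lemma dot_bound d1 d2 : dot d1 d1 = 1 -> dot d2 d2 = 1 -> -1 <= dot d1 d2 <= 1.
Proof.
  destruct d1 as [[u v] w]; destruct d2 as [[u' v'] w']; simpl; intros.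
  assert (0 <= (u-u')^2+(v-v')^2+(w-w')^2) by (apply Rplus_le_le_0_compat; [apply Rplus_le_le_0_compat|]; apply pow2_ge_0).
  assert (0 <= (u+u')^2+(v+v')^2+(w+w')^2) by (apply Rplus_le_le_0_compat; [apply Rplus_le_le_0_compat|]; apply pow2_ge_0).
  split; nra.
Qed.

Lemma dot_scl D1 D2 : 0 < dot D1 D1 -> 0 < dot D2 D2 ->
  dot (scl (/ nrm D1) D1) (scl (/ nrm D2) D2) = dot D1 D2 / (sqrt (dot D1 D1) * sqrt (dot D2 D2)).
Proof.
  unfold nrm. intros h1 h2.
  assert (0 < sqrt (dot D1 D1)) by (apply sqrt_lt_R0; lra).
  assert (0 < sqrt (dot D2 D2)) by (apply sqrt_lt_R0; lra).
  revert H H0. set (s1 := sqrt _). set (s2 := sqrt _).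
  destruct D1 as [[u v] w]; destruct D2 as [[u' v'] w']; simpl; intros.
  field; lra.
Qed.

Theorem theorem4p1 (a b c alpha x y z : R) :
  (a, b, c) <> (0, 0, 0) ->
  0 < alpha < PI ->
  (x, y, z) <> (a, b, c) ->
  (x, y, z) <> (- a * exp c, - b * exp (- c), - c) ->
  (isoptic alpha (a, b, c) (- a * exp c, - b * exp (- c), - c) (x, y, z) <->
   cos alpha =
     (exp z * (x + a * exp c) * (x - a) + exp (- z) * (y + b * exp (- c)) * (y - b)
        + 4 * sinh ((z + c) / 2) * sinh ((z - c) / 2))
     / (sqrt (exp (z + c) * (x - a) ^ 2 + exp (- (z + c)) * (y - b) ^ 2
              + 4 * sinh ((z - c) / 2) ^ 2)
        * sqrt (exp (z - c) * (x + a * exp c) ^ 2 + exp (- (z - c)) * (y + b * exp (- c)) ^ 2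
              + 4 * sinh ((z + c) / 2) ^ 2))).
Proof.
  intros H0 Ha HP1 HP2.
  set (A2 := (- a * exp c, - b * exp (- c), - c)) in *.
  assert (Hz : 0 < exp z) by apply exp_pos.
  assert (Hz' : 0 < exp (-z)) by apply exp_pos.
  assert (Q1nz : Tinv (x,y,z) (a,b,c) <> (0,0,0)).
  { simpl. intro h. injection h. intros h3 h2 h1. apply HP1.
    assert (a = x) by nra. assert (b = y) by nra. assert (z = c) by lra. subst; reflexivity. }
  assert (Q2nz : Tinv (x,y,z) A2 <> (0,0,0)).
  { unfold A2; simpl. intro h. injection h. intros h3 h2 h1. apply HP2.
    assert (- a * exp c = x) by nra. assert (- b * exp (-c) = y) by nra. assert (z = - c) by lra.
    rewrite <- H, <- H1, H2. reflexivity. }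
  set (Q1 := Tinv (x,y,z) (a,b,c)) in *. set (Q2 := Tinv (x,y,z) A2) in *.
  destruct (idents a b c x y z) as [I1 [I2 I3]]. fold A2 Q1 Q2 in I1, I2, I3.
  set (d1 := scl (/ nrm (Dv Q1)) (Dv Q1)). set (d2 := scl (/ nrm (Dv Q2)) (Dv Q2)).
  assert (U1 : dot d1 d1 = 1) by (apply unit_of; auto).
  assert (U2 : dot d2 d2 = 1) by (apply unit_of; auto).
  assert (Hdot : dot d1 d2 = _ / (sqrt _ * sqrt _))
    by (unfold d1, d2; apply dot_scl; apply Dv_pos; auto).
  rewrite I1, I2, I3 in Hdot. rewrite <- Hdot.
  generalize (dot_bound d1 d2 U1 U2); intro Hb.
  split.
  - intros [_ [_ [V1 [V2 [[e1 [He1 E1]] [[e2 [He2 E2]] Hang]]]]]].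
    fold Q1 in He1. fold Q2 in He2.
    apply dir_unique in He1; auto. apply dir_unique in He2; auto.
    fold d1 in He1. fold d2 in He2. subst.
    rewrite angle_units, cos_acos; auto.
  - intro Hc. split; [auto|split; [auto|]].
    exists (dT (x,y,z) d1), (dT (x,y,z) d2). split; [|split].
    + exists d1. split; [apply dir_exists; auto| reflexivity].
    + exists d2. split; [apply dir_exists; auto| reflexivity].
    + rewrite angle_units; auto. rewrite <- Hc, acos_cos; lra.
Qed.
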